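(* Let $A>0$ and let $c:[0,1]\times S^1\to\mathbb R^2$ be a smooth path in $\mathrm{Imm}(S^1,\mathbb R^2)$ and $L>0$ such that for all $t,\theta$: $|c_\theta(t,\theta)|=\ell(t)/2\pi$ where $\ell(t)=\ell(c(t,\cdot))$; $\langle c_t,c_\theta\rangle(t,0)=0$; and $\int_{S^1}(1+A\kappa_{c(t)}^2)\langle c_t,ic_\theta\rangle^2\,d\theta/|c_\theta|=L^2$. Let $\ell_{\max}=\max_t\ell(t)$, $\ell_{\min}=\min_t\ell(t)$. Then $$|c(t_1,\theta_1)-c(t_2,\theta_2)|\le\frac{\ell_{\max}}{2\pi}|\theta_1-\theta_2|+7\big(\ell_{\max}^{3/4}A^{-1/4}+\ell_{\max}^{1/4}\big)\sqrt{L|t_1-t_2|}$$ whenever $|t_1-t_2|\le\min(2\sqrt{A\ell_{\min}},\ell_{\min}^{3/2})/(8L)$.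
   Context: $S^1=\mathbb R/2\pi\mathbb Z$ (with $|\theta_1-\theta_2|$ the distance of representatives in $[0,2\pi]$), $\mathbb R^2\cong\mathbb C$. $\mathrm{Imm}(S^1,\mathbb R^2)$ is the space of smooth immersions; a smooth path is a jointly smooth map $c(t,\theta)$ with each $c(t,\cdot)$ an immersion. $\ell(c)=\int_{S^1}|c_\theta|d\theta$, $\kappa_c=\det(c_\theta,c_{\theta\theta})/|c_\theta|^3$. *)

(* Defs.v *)
From Stdlib Require Import Reals.
From Coquelicot Require Import Coquelicot.
Open Scope R_scope.

(* Joint smoothness (C^infinity) of a real function of two real variables:
   a family D i j (meant to be d^i/dt^i d^j/dtheta^j f) with D 0 0 = f,
   each D i j has partial derivatives D (i+1) j in the first variable and
   D i (j+1) in the second variable, and each D i j is jointly continuous. *)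
Definition smooth2 (f : R -> R -> R) : Prop :=
  exists D : nat -> nat -> R -> R -> R,
    D O O = f /\
    forall (i j : nat) (t s : R),
      is_derive (fun u => D i j u s) t (D (S i) j t s) /\
      is_derive (fun v => D i j t v) s (D i (S j) t s) /\
      continuous (fun p : R * R => D i j (fst p) (snd p)) (t, s).

Definition path := R -> R -> R * R.

Definition cx (c : path) t s := fst (c t s).
Definition cy (c : path) t s := snd (c t s).

(* smooth path c : R x S^1 -> R^2 (2 pi-periodic in theta) *)
Definition smooth_path (c : path) : Prop :=
  smooth2 (cx c) /\ smooth2 (cy c) /\
  forall t s, c t (s + 2 * PI) = c t s.

Definition d_th (f : R -> R -> R) t s := Derive (fun v => f t v) s.
Definition d_t (f : R -> R -> R) t s := Derive (fun u => f u s) t.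

Definition speed (c : path) t s :=
  sqrt (d_th (cx c) t s ^ 2 + d_th (cy c) t s ^ 2).

Definition immersion_at (c : path) t : Prop :=
  forall s, (d_th (cx c) t s, d_th (cy c) t s) <> (0, 0).

Definition len (c : path) t := RInt (fun s => speed c t s) 0 (2 * PI).

Definition curv (c : path) t s :=
  (d_th (cx c) t s * d_th (d_th (cy c)) t s
   - d_th (cy c) t s * d_th (d_th (cx c)) t s) / speed c t s ^ 3.

Definition tang_vel (c : path) t s :=
  d_t (cx c) t s * d_th (cx c) t s + d_t (cy c) t s * d_th (cy c) t s.

(* <c_t, i c_theta>, with i c_theta = (- y_theta, x_theta) *)
Definition norm_vel (c : path) t s :=
  d_t (cx c) t s * (- d_th (cy c) t s) + d_t (cy c) t s * d_th (cx c) t s.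

Definition dist2 (p q : R * R) :=
  sqrt ((fst p - fst q) ^ 2 + (snd p - snd q) ^ 2).

(* Main.v *)
Require Import Defs.
From Stdlib Require Import Reals Lra Psatz Lia.
From Coquelicot Require Import Coquelicot.
Open Scope R_scope.

Lemma c2d_cont_snd (f : R -> R -> R) x y :
  continuity_2d_pt f x y -> continuity_pt (fun v => f x v) y.
Proof.
  intros H. intros eps Heps. destruct (H (mkposreal eps Heps)) as [d Hd].
  exists d. split. apply cond_pos. intros z [_ Hz]. simpl in Hz. unfold R_dist in *.
  apply Hd. rewrite Rminus_eq_0, Rabs_R0; apply cond_pos. exact Hz.
Qed.

Lemma c2d_cont_fst (f : R -> R -> R) x y :
  continuity_2d_pt f x y -> continuity_pt (fun u => f u y) x.
Proof.
  intros H. intros eps Heps. destruct (H (mkposreal eps Heps)) as [d Hd].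
  exists d. split. apply cond_pos. intros z [_ Hz]. simpl in Hz. unfold R_dist in *.
  apply Hd. exact Hz. rewrite Rminus_eq_0, Rabs_R0; apply cond_pos.
Qed.

Lemma cont_of_c2d (f : R -> R -> R) x y :
  continuity_2d_pt f x y -> continuous (fun v => f x v) y.
Proof. intros H; apply continuity_pt_filterlim, c2d_cont_snd, H. Qed.

Lemma MVT_int (f df : R -> R) a b : a < b ->
  (forall x, a < x < b -> is_derive f x (df x)) ->
  (forall x, a <= x <= b -> continuity_pt f x) ->
  exists x, a < x < b /\ f b - f a = df x * (b - a).
Proof.
  intros Hab Hd Hc.
  assert (pr1 : forall x, a < x < b -> derivable_pt f x).
  { intros x Hx. exists (df x). apply is_derive_Reals, Hd, Hx. }
  assert (pr2 : forall x, a < x < b -> derivable_pt id x).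
  { intros x Hx. apply derivable_pt_id. }
  destruct (MVT f id a b pr1 pr2 Hab Hc) as [x [P HP]].
  { intros; apply continuity_pt_id. }
  exists x; split; auto.
  rewrite (derive_pt_eq_0 f x (df x) (pr1 x P)) in HP by (apply is_derive_Reals, Hd, P).
  rewrite (derive_pt_eq_0 id x 1 (pr2 x P)) in HP by (apply derivable_pt_lim_id).
  unfold id in HP. lra.
Qed.

Lemma deriv_bound (f df : R -> R) a b M : a <= b ->
  (forall x, a <= x <= b -> is_derive f x (df x)) ->
  (forall x, a < x < b -> df x <= M) -> f b - f a <= M * (b - a).
Proof.
  intros Hab Hd HM. destruct (Req_dec a b) as [->|Hne]. lra.
  destruct (MVT_int f df a b) as [x [Hx E]]. lra.
  intros; apply Hd; lra.
  intros x Hx. apply continuity_pt_filterlim. apply (ex_derive_continuous f).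
  exists (df x); apply Hd, Hx.
  rewrite E. apply Rmult_le_compat_r. lra. apply HM, Hx.
Qed.

Lemma der_mult (f g : R -> R) x df dg : is_derive f x df -> is_derive g x dg ->
  is_derive (fun y => f y * g y) x (df * g x + f x * dg).
Proof. intros H1 H2. apply (is_derive_mult f g x df dg H1 H2). intros; apply Rmult_comm. Qed.
Lemma der_plus (f g : R -> R) x df dg : is_derive f x df -> is_derive g x dg ->
  is_derive (fun y => f y + g y) x (df + dg).
Proof. intros H1 H2. apply (is_derive_plus f g x df dg H1 H2). Qed.
Lemma der_minus (f g : R -> R) x df dg : is_derive f x df -> is_derive g x dg ->
  is_derive (fun y => f y - g y) x (df - dg).
Proof. intros H1 H2. apply (is_derive_minus f g x df dg H1 H2). Qed.
Lemma der_sq (f : R -> R) x df : is_derive f x df ->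
  is_derive (fun y => f y ^ 2) x (2 * f x * df).
Proof. intros H. pose proof (der_mult f f x df df H H) as H2.
  replace (2 * f x * df) with (df * f x + f x * df) by ring.
  apply (is_derive_ext (fun y => f y * f y)); [intros; simpl; ring | exact H2]. Qed.
Lemma der_const (k x : R) : is_derive (fun _ : R => k) x 0.
Proof. apply (is_derive_const k x). Qed.

Lemma c2d_pow (f : R -> R -> R) x y n : continuity_2d_pt f x y ->
  continuity_2d_pt (fun u v => f u v ^ n) x y.
Proof. intros H; induction n.
  apply (continuity_2d_pt_ext (fun _ _ => 1)); [intros; simpl; ring | apply continuity_2d_pt_const].
  apply (continuity_2d_pt_ext (fun u v => f u v * f u v ^ n)). intros; simpl; ring.
  apply continuity_2d_pt_mult; auto. Qed.

Ltac c2d := repeat first [ apply continuity_2d_pt_plus | apply continuity_2d_pt_minus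
  | apply continuity_2d_pt_mult | apply continuity_2d_pt_opp | apply c2d_pow
  | apply continuity_2d_pt_const | apply continuity_2d_pt_id1 | apply continuity_2d_pt_id2 ].

Lemma RInt_plusR (f g : R -> R) a b : ex_RInt f a b -> ex_RInt g a b ->
  RInt (fun x => f x + g x) a b = RInt f a b + RInt g a b.
Proof. intros; apply (RInt_plus f g a b); auto. Qed.
Lemma RInt_minusR (f g : R -> R) a b : ex_RInt f a b -> ex_RInt g a b ->
  RInt (fun x => f x - g x) a b = RInt f a b - RInt g a b.
Proof. intros; apply (RInt_minus f g a b); auto. Qed.
Lemma RInt_scalR (f : R -> R) a b l : ex_RInt f a b ->
  RInt (fun x => l * f x) a b = l * RInt f a b.
Proof. intros; apply (RInt_scal f a b l); auto. Qed.
Lemma RInt_constR a b k : RInt (fun _ => k) a b = (b - a) * k.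
Proof. rewrite RInt_const. reflexivity. Qed.
Lemma ex_RInt_plusR (f g : R -> R) a b : ex_RInt f a b -> ex_RInt g a b ->
  ex_RInt (fun x => f x + g x) a b.
Proof. intros; apply (ex_RInt_plus f g a b); auto. Qed.
Lemma ex_RInt_scalR (f : R -> R) a b l : ex_RInt f a b ->
  ex_RInt (fun x => l * f x) a b.
Proof. intros; apply (ex_RInt_scal f a b l); auto. Qed.
Lemma RInt_leR (f g : R -> R) a b : a <= b -> ex_RInt f a b -> ex_RInt g a b ->
  (forall x, a <= x <= b -> f x <= g x) -> RInt f a b <= RInt g a b.
Proof. intros; apply RInt_le; auto. intros; apply H2; lra. Qed.
Lemma RInt_ge0R (f : R -> R) a b : a <= b -> ex_RInt f a b ->
  (forall x, a <= x <= b -> 0 <= f x) -> 0 <= RInt f a b.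
Proof. intros; apply RInt_ge_0; auto. intros; apply H1; lra. Qed.

Lemma Rp14 l : 0 < l -> Rpower l (1 / 4) = sqrt (sqrt l).
Proof. intros Hl. replace (1 / 4) with (/ 2 * / 2) by field.
  rewrite <- Rpower_mult, (Rpower_sqrt l Hl), Rpower_sqrt; auto. apply sqrt_lt_R0; auto. Qed.
Lemma Rp34 l : 0 < l -> Rpower l (3 / 4) = sqrt (sqrt l) ^ 3.
Proof. intros Hl. replace (3 / 4) with (1 / 4 * INR 3) by (simpl; field).
  rewrite <- Rpower_mult, Rp14, Rpower_pow; auto. apply sqrt_lt_R0, sqrt_lt_R0; auto. Qed.
Lemma Rpm14 l : 0 < l -> Rpower l (- (1 / 4)) = / sqrt (sqrt l).
Proof. intros Hl. rewrite Rpower_Ropp, Rp14; auto. Qed.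
Lemma Rp32 l : 0 < l -> Rpower l (3 / 2) = l * sqrt l.
Proof. intros Hl. replace (3 / 2) with (1 + / 2) by field.
  rewrite Rpower_plus, Rpower_1, Rpower_sqrt; auto. Qed.

Section Main.
Variable c : path.
Variables Dx Dy : nat -> nat -> R -> R -> R.
Hypothesis Dx0 : Dx O O = cx c.
Hypothesis Dy0 : Dy O O = cy c.
Hypothesis HDx : forall (i j : nat) (t s : R),
      is_derive (fun u => Dx i j u s) t (Dx (S i) j t s) /\
      is_derive (fun v => Dx i j t v) s (Dx i (S j) t s) /\
      continuous (fun p : R * R => Dx i j (fst p) (snd p)) (t, s).
Hypothesis HDy : forall (i j : nat) (t s : R),
      is_derive (fun u => Dy i j u s) t (Dy (S i) j t s) /\
      is_derive (fun v => Dy i j t v) s (Dy i (S j) t s) /\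
      continuous (fun p : R * R => Dy i j (fst p) (snd p)) (t, s).
Hypothesis Hper : forall t s, c t (s + 2 * PI) = c t s.

Lemma dxt i j t s : is_derive (fun u => Dx i j u s) t (Dx (S i) j t s).
Proof. apply HDx. Qed.
Lemma dxs i j t s : is_derive (fun v => Dx i j t v) s (Dx i (S j) t s).
Proof. apply HDx. Qed.
Lemma dyt i j t s : is_derive (fun u => Dy i j u s) t (Dy (S i) j t s).
Proof. apply HDy. Qed.
Lemma dys i j t s : is_derive (fun v => Dy i j t v) s (Dy i (S j) t s).
Proof. apply HDy. Qed.
Lemma cx2 i j t s : continuity_2d_pt (Dx i j) t s.
Proof. apply continuity_2d_pt_filterlim. apply HDx. Qed.
Lemma cy2 i j t s : continuity_2d_pt (Dy i j) t s.
Proof. apply continuity_2d_pt_filterlim. apply HDy. Qed.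

Lemma cxE t s : cx c t s = Dx 0 0 t s.
Proof. rewrite Dx0; reflexivity. Qed.
Lemma cyE t s : cy c t s = Dy 0 0 t s.
Proof. rewrite Dy0; reflexivity. Qed.

Lemma dthx t s : d_th (cx c) t s = Dx 0 1 t s.
Proof. unfold d_th. rewrite <- Dx0. apply is_derive_unique, (dxs 0 0). Qed.
Lemma dthy t s : d_th (cy c) t s = Dy 0 1 t s.
Proof. unfold d_th. rewrite <- Dy0. apply is_derive_unique, (dys 0 0). Qed.
Lemma dtx t s : d_t (cx c) t s = Dx 1 0 t s.
Proof. unfold d_t. rewrite <- Dx0. apply is_derive_unique, (dxt 0 0). Qed.
Lemma dty t s : d_t (cy c) t s = Dy 1 0 t s.
Proof. unfold d_t. rewrite <- Dy0. apply is_derive_unique, (dyt 0 0). Qed.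
Lemma dth2x t s : d_th (d_th (cx c)) t s = Dx 0 2 t s.
Proof. change (Derive (fun v => d_th (cx c) t v) s = Dx 0 2 t s).
  rewrite (Derive_ext _ (fun v => Dx 0 1 t v)) by apply dthx.
  apply is_derive_unique, (dxs 0 1). Qed.
Lemma dth2y t s : d_th (d_th (cy c)) t s = Dy 0 2 t s.
Proof. change (Derive (fun v => d_th (cy c) t v) s = Dy 0 2 t s).
  rewrite (Derive_ext _ (fun v => Dy 0 1 t v)) by apply dthy.
  apply is_derive_unique, (dys 0 1). Qed.

Lemma perx t s : Dx 0 0 t (s + 2 * PI) = Dx 0 0 t s.
Proof. rewrite <- !cxE. unfold cx. rewrite Hper. reflexivity. Qed.
Lemma pery t s : Dy 0 0 t (s + 2 * PI) = Dy 0 0 t s.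
Proof. rewrite <- !cyE. unfold cy. rewrite Hper. reflexivity. Qed.

Lemma perx10 t s : Dx 1 0 t (s + 2 * PI) = Dx 1 0 t s.
Proof.
  rewrite <- (is_derive_unique _ _ _ (dxt 0 0 t (s + 2*PI))).
  rewrite <- (is_derive_unique _ _ _ (dxt 0 0 t s)).
  apply Derive_ext. intros; apply perx. Qed.
Lemma pery10 t s : Dy 1 0 t (s + 2 * PI) = Dy 1 0 t s.
Proof.
  rewrite <- (is_derive_unique _ _ _ (dyt 0 0 t (s + 2*PI))).
  rewrite <- (is_derive_unique _ _ _ (dyt 0 0 t s)).
  apply Derive_ext. intros; apply pery. Qed.

Lemma shift_der (f : R -> R) s l : is_derive f (s + 2*PI) l ->
  is_derive (fun v => f (v + 2*PI)) s l.
Proof.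
  intros H. assert (Hg : is_derive (fun v => v + 2*PI) s 1) by (auto_derive; auto; ring).
  generalize (is_derive_comp f (fun v => v + 2*PI) s l 1 H Hg).
  intros H2. replace l with (scal 1 l). exact H2. change (1 * l = l). ring.
Qed.

Lemma perx01 t s : Dx 0 1 t (s + 2 * PI) = Dx 0 1 t s.
Proof.
  rewrite <- (is_derive_unique _ _ _ (dxs 0 0 t s)). apply sym_eq, is_derive_unique.
  apply (is_derive_ext (fun v => Dx 0 0 t (v + 2*PI))). intros; apply perx.
  apply (shift_der (fun v => Dx 0 0 t v)), dxs.
Qed.
Lemma pery01 t s : Dy 0 1 t (s + 2 * PI) = Dy 0 1 t s.
Proof.
  rewrite <- (is_derive_unique _ _ _ (dys 0 0 t s)). apply sym_eq, is_derive_unique.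
  apply (is_derive_ext (fun v => Dy 0 0 t (v + 2*PI))). intros; apply pery.
  apply (shift_der (fun v => Dy 0 0 t v)), dys.
Qed.
Ltac c2dD := repeat first [ apply continuity_2d_pt_plus | apply continuity_2d_pt_minus
  | apply continuity_2d_pt_mult | apply continuity_2d_pt_opp | apply c2d_pow
  | apply continuity_2d_pt_const | apply continuity_2d_pt_id1 | apply continuity_2d_pt_id2
  | apply cx2 | apply cy2 ].

Lemma exR (f : R -> R -> R) t a b : (forall u v, continuity_2d_pt f u v) ->
  ex_RInt (fun v => f t v) a b.
Proof. intros H. apply (@ex_RInt_continuous R_CompleteNormedModule). intros; apply cont_of_c2d, H. Qed.

Definition S2 t s := Dx 0 1 t s ^ 2 + Dy 0 1 t s ^ 2.
Definition Cst t s := Dx 0 1 t s * Dx 1 1 t s + Dy 0 1 t s * Dy 1 1 t s.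
Definition hh t s := Dx 1 0 t s * Dx 0 2 t s + Dy 1 0 t s * Dy 0 2 t s.
Definition tv t s := Dx 1 0 t s * Dx 0 1 t s + Dy 1 0 t s * Dy 0 1 t s.
Definition nv t s := Dx 1 0 t s * (- Dy 0 1 t s) + Dy 1 0 t s * Dx 0 1 t s.
Definition sig t := sqrt (S2 t 0).

Hypothesis HS2 : forall t s, 0 <= t <= 1 -> S2 t s = S2 t 0.
Hypothesis HS2pos : forall t, 0 <= t <= 1 -> 0 < S2 t 0.
Hypothesis Htv0 : forall t, 0 <= t <= 1 -> tv t 0 = 0.

Lemma sig_pos t : 0 <= t <= 1 -> 0 < sig t.
Proof. intros; apply sqrt_lt_R0, HS2pos; auto. Qed.
Lemma S2_sig t s : 0 <= t <= 1 -> S2 t s = sig t ^ 2.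
Proof. intros Ht. rewrite HS2 by auto. unfold sig. simpl. rewrite Rmult_1_r, sqrt_sqrt; auto.
  left; apply HS2pos; auto. Qed.

Lemma orth t s : 0 <= t <= 1 -> Dx 0 1 t s * Dx 0 2 t s + Dy 0 1 t s * Dy 0 2 t s = 0.
Proof.
 intros Ht.
 assert (H1 : is_derive (fun v => S2 t v) s (2 * Dx 0 1 t s * Dx 0 2 t s + 2 * Dy 0 1 t s * Dy 0 2 t s)).
 { unfold S2. apply der_plus; [apply (der_sq (fun v => Dx 0 1 t v)) | apply (der_sq (fun v => Dy 0 1 t v))]; [apply dxs|apply dys]. }
 assert (H2 : is_derive (fun v => S2 t v) s 0).
 { apply (is_derive_ext (fun _ => S2 t 0)). intros; symmetry; apply HS2, Ht. apply der_const. }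
 apply is_derive_unique in H1. apply is_derive_unique in H2. rewrite H1 in H2. lra.
Qed.

Lemma Cconst t s : 0 < t < 1 -> Cst t s = Cst t 0.
Proof.
 intros Ht.
 assert (H1 : is_derive (fun u => S2 u s) t (2 * Dx 0 1 t s * Dx 1 1 t s + 2 * Dy 0 1 t s * Dy 1 1 t s)).
 { unfold S2. apply der_plus; [apply (der_sq (fun u => Dx 0 1 u s)) | apply (der_sq (fun u => Dy 0 1 u s))]; [apply dxt|apply dyt]. }
 assert (H2 : is_derive (fun u => S2 u s) t (2 * Dx 0 1 t 0 * Dx 1 1 t 0 + 2 * Dy 0 1 t 0 * Dy 1 1 t 0)).
 { apply (is_derive_ext_loc (fun u => S2 u 0)).
   apply (locally_interval _ t 0 1); simpl; try lra. intros y Hy1 Hy2. symmetry; apply HS2; lra.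
   unfold S2. apply der_plus; [apply (der_sq (fun u => Dx 0 1 u 0)) | apply (der_sq (fun u => Dy 0 1 u 0))]; [apply dxt|apply dyt]. }
 apply is_derive_unique in H1. apply is_derive_unique in H2. rewrite H1 in H2. unfold Cst. lra.
Qed.

Lemma tv_der t s : is_derive (fun v => tv t v) s (Cst t s + hh t s).
Proof.
 unfold tv. replace (Cst t s + hh t s) with
   ((Dx 1 1 t s * Dx 0 1 t s + Dx 1 0 t s * Dx 0 2 t s) + (Dy 1 1 t s * Dy 0 1 t s + Dy 1 0 t s * Dy 0 2 t s))
   by (unfold Cst, hh; ring).
 apply der_plus; apply der_mult; first [apply dxs | apply dys].
Qed.

Lemma hh_c2 u v : continuity_2d_pt hh u v.
Proof. unfold hh. apply (continuity_2d_pt_ext (fun u v => Dx 1 0 u v * Dx 0 2 u v + Dy 1 0 u v * Dy 0 2 u v)).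
  reflexivity. c2dD. Qed.

Lemma tv_int t s : 0 < t < 1 -> tv t s - tv t 0 = s * Cst t 0 + RInt (hh t) 0 s.
Proof.
 intros Ht.
 assert (H := is_RInt_derive (fun v => tv t v) (fun v => Cst t 0 + hh t v) 0 s).
 apply is_RInt_unique in H.
 - rewrite RInt_plusR in H. rewrite RInt_constR in H. change (minus (tv t s) (tv t 0)) with (tv t s - tv t 0) in H.
   rewrite <- H. ring. apply ex_RInt_const. apply (exR hh). apply hh_c2.
 - intros x _. rewrite <- (Cconst t x Ht). apply tv_der.
 - intros x _. apply (cont_of_c2d (fun u v => Cst t 0 + hh u v)). apply continuity_2d_pt_plus.
   apply continuity_2d_pt_const. apply hh_c2.
Qed.

Lemma tv_per t : tv t (2 * PI) = tv t 0.
Proof. unfold tv. replace (2 * PI) with (0 + 2 * PI) by ring.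
  rewrite perx10, perx01, pery10, pery01. reflexivity. Qed.

Lemma tv_formula t s : 0 < t < 1 ->
  tv t s = RInt (hh t) 0 s - s / (2 * PI) * RInt (hh t) 0 (2 * PI).
Proof.
 intros Ht. pose proof (tv_int t s Ht). pose proof (tv_int t (2*PI) Ht).
 rewrite tv_per, Htv0 in H0 by lra. rewrite Htv0 in H by lra.
 pose proof PI_RGT_0.
 assert (Cst t 0 = - RInt (hh t) 0 (2 * PI) / (2 * PI)) by (field_simplify_eq; lra).
 rewrite H2 in H. rewrite Rminus_0_r in H. rewrite H. field. lra.
Qed.
Lemma habs_c2 u v : continuity_2d_pt (fun u v => Rabs (hh u v)) u v.
Proof. apply (continuity_1d_2d_pt_comp Rabs hh). apply Rcontinuity_abs. apply hh_c2. Qed.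

Lemma exR_hh t a b : ex_RInt (hh t) a b.
Proof. apply (exR hh). apply hh_c2. Qed.
Lemma exR_habs t a b : ex_RInt (fun v => Rabs (hh t v)) a b.
Proof. apply (exR (fun u v => Rabs (hh u v))). apply habs_c2. Qed.

Lemma tv_bound t s : 0 < t < 1 -> 0 <= s <= 2 * PI ->
  Rabs (tv t s) <= 2 * RInt (fun v => Rabs (hh t v)) 0 (2 * PI).
Proof.
 intros Ht Hs. pose proof PI_RGT_0 as HP. rewrite tv_formula by auto.
 set (I := RInt (fun v => Rabs (hh t v)) 0 (2 * PI)).
 assert (H1 : Rabs (RInt (hh t) 0 s) <= I).
 { eapply Rle_trans. apply abs_RInt_le. lra. apply exR_hh.
   unfold I. rewrite <- (RInt_Chasles (fun v => Rabs (hh t v)) 0 s (2 * PI)) by apply exR_habs.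
   change (plus ?a ?b) with (a + b).
   assert (0 <= RInt (fun v : R => Rabs (hh t v)) s (2 * PI)).
   apply RInt_ge0R. lra. apply exR_habs. intros; apply Rabs_pos. lra. }
 assert (H2 : Rabs (RInt (hh t) 0 (2*PI)) <= I).
 { apply abs_RInt_le. lra. apply exR_hh. }
 assert (H3 : 0 <= s / (2 * PI) <= 1).
 { split. apply Rdiv_le_0_compat; lra. apply Rmult_le_reg_r with (2*PI). lra.
   unfold Rdiv; rewrite Rmult_assoc, Rinv_l; lra. }
 eapply Rle_trans. apply Rabs_triang. rewrite Rabs_Ropp, Rabs_mult.
 rewrite (Rabs_right (s / (2*PI))) by lra.
 assert (s / (2 * PI) * Rabs (RInt (hh t) 0 (2 * PI)) <= I).
 { apply Rle_trans with (1 * I). apply Rmult_le_compat; try lra. apply Rabs_pos. lra. }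
 lra.
Qed.

Lemma amgm_int (f : R -> R) a b B : a <= b -> 0 < B ->
  ex_RInt f a b -> ex_RInt (fun v => f v ^ 2) a b -> ex_RInt (fun v => Rabs (f v)) a b ->
  RInt (fun v => f v ^ 2) a b <= B ->
  RInt (fun v => Rabs (f v)) a b <= sqrt ((b - a) * B).
Proof.
 intros Hab HB E1 E2 E3 Hint. destruct (Req_dec a b) as [<-|Hne].
 - rewrite RInt_point. apply sqrt_pos.
 - set (r := sqrt ((b - a) * B)).
   assert (Hr : 0 < r) by (apply sqrt_lt_R0; apply Rmult_lt_0_compat; lra).
   assert (Hr2 : r * r = (b - a) * B) by (apply sqrt_sqrt; nra).
   set (mu := r / (b - a)).
   assert (Hmu : 0 < mu) by (unfold mu; apply Rdiv_lt_0_compat; lra).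
   assert (H : RInt (fun v => Rabs (f v)) a b <=
               RInt (fun v => mu / 2 + / (2 * mu) * f v ^ 2) a b).
   { apply RInt_leR; auto. apply ex_RInt_plusR. apply ex_RInt_const. apply ex_RInt_scalR; auto.
     intros x _. assert (0 <= (Rabs (f x) - mu) ^ 2) by apply pow2_ge_0.
     rewrite <- (pow2_abs (f x)). set (y := Rabs (f x)) in *.
     apply Rmult_le_reg_l with (2 * mu). lra.
     replace (2 * mu * (mu / 2 + / (2 * mu) * y ^ 2)) with (mu * mu + y ^ 2) by (field; lra). nra. }
   rewrite RInt_plusR, RInt_constR, RInt_scalR in H; auto.
   2: apply ex_RInt_const. 2: apply ex_RInt_scalR; auto.
   assert (/ (2 * mu) * RInt (fun v => f v ^ 2) a b <= / (2 * mu) * B).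
   { apply Rmult_le_compat_l. left; apply Rinv_0_lt_compat; lra. auto. }
   assert ((b - a) * (mu / 2) + / (2 * mu) * B = r).
   { assert (HB' : B = r * r / (b - a)) by (rewrite Hr2; field; lra).
     rewrite HB'. unfold mu. field. split; lra. }
   fold r. lra.
Qed.
Variables A L : R.
Hypothesis HA : 0 < A.
Hypothesis HL : 0 < L.
Hypothesis Hen : forall t, 0 <= t <= 1 ->
  RInt (fun s => (1 + A * curv c t s ^ 2) * norm_vel c t s ^ 2 / speed c t s) 0 (2 * PI) = L ^ 2.

Lemma nv_c2 u v : continuity_2d_pt nv u v.
Proof. unfold nv. apply (continuity_2d_pt_ext (fun u v => Dx 1 0 u v * (- Dy 0 1 u v) + Dy 1 0 u v * Dx 0 1 u v)).
  reflexivity. c2dD. Qed.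
Lemma tv_c2 u v : continuity_2d_pt tv u v.
Proof. unfold tv. apply (continuity_2d_pt_ext (fun u v => Dx 1 0 u v * Dx 0 1 u v + Dy 1 0 u v * Dy 0 1 u v)).
  reflexivity. c2dD. Qed.

Lemma speed_sig t s : 0 <= t <= 1 -> speed c t s = sig t.
Proof. intros Ht. unfold speed. rewrite dthx, dthy. fold (S2 t s). rewrite S2_sig by auto.
  apply sqrt_pow2. left; apply sig_pos; auto. Qed.

Lemma integrand_eq t s : 0 <= t <= 1 ->
  (1 + A * curv c t s ^ 2) * norm_vel c t s ^ 2 / speed c t s =
  nv t s ^ 2 / sig t + A * (hh t s ^ 2 / sig t ^ 3).
Proof.
 intros Ht. pose proof (sig_pos t Ht) as Hs. pose proof (orth t s Ht) as Ho.
 pose proof (S2_sig t s Ht) as HS. unfold S2 in HS.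
 unfold curv, norm_vel. rewrite !speed_sig by auto. rewrite dthx, dthy, dtx, dty, dth2x, dth2y.
 fold (nv t s).
 set (k := Dx 0 1 t s * Dy 0 2 t s - Dy 0 1 t s * Dx 0 2 t s).
 assert (Hk : k * nv t s = sig t ^ 2 * hh t s).
 { unfold k, nv, hh. rewrite <- HS.
   replace ((Dx 0 1 t s * Dy 0 2 t s - Dy 0 1 t s * Dx 0 2 t s) *
     (Dx 1 0 t s * - Dy 0 1 t s + Dy 1 0 t s * Dx 0 1 t s)) with
     ((Dx 0 1 t s ^ 2 + Dy 0 1 t s ^ 2) * (Dx 1 0 t s * Dx 0 2 t s + Dy 1 0 t s * Dy 0 2 t s)
      - (Dx 0 1 t s * Dx 1 0 t s + Dy 0 1 t s * Dy 1 0 t s) * (Dx 0 1 t s * Dx 0 2 t s + Dy 0 1 t s * Dy 0 2 t s)) by ring.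
   rewrite Ho. ring. }
 assert (E : (k / sig t ^ 3) ^ 2 * nv t s ^ 2 = hh t s ^ 2 / sig t ^ 2).
 { replace ((k / sig t ^ 3) ^ 2 * nv t s ^ 2) with ((k * nv t s) ^ 2 / sig t ^ 6) by (field; lra).
   rewrite Hk. field. lra. }
 replace ((1 + A * (k / sig t ^ 3) ^ 2) * nv t s ^ 2 / sig t) with
   (nv t s ^ 2 / sig t + A * ((k / sig t ^ 3) ^ 2 * nv t s ^ 2) / sig t) by (field; lra).
 rewrite E. field. lra.
Qed.

Lemma nv2_ex t a b : ex_RInt (fun s => nv t s ^ 2) a b.
Proof. apply (exR (fun u v => nv u v ^ 2)). intros; apply c2d_pow, nv_c2. Qed.
Lemma hh2_ex t a b : ex_RInt (fun s => hh t s ^ 2) a b.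
Proof. apply (exR (fun u v => hh u v ^ 2)). intros; apply c2d_pow, hh_c2. Qed.

Lemma energy2 t : 0 <= t <= 1 ->
  RInt (fun s => / sig t * nv t s ^ 2 + A / sig t ^ 3 * hh t s ^ 2) 0 (2 * PI) = L ^ 2.
Proof.
 intros Ht. rewrite <- (Hen t Ht). apply RInt_ext. intros x _.
 match goal with |- ?a = ?b => change (@eq R a b) end.
 rewrite integrand_eq by auto.
 pose proof (sig_pos t Ht). field. lra.
Qed.

Lemma L2_bounds t : 0 <= t <= 1 ->
  RInt (fun s => nv t s ^ 2) 0 (2 * PI) <= sig t * L ^ 2 /\
  RInt (fun s => hh t s ^ 2) 0 (2 * PI) <= sig t ^ 3 * L ^ 2 / A.
Proof.
 intros Ht. pose proof (sig_pos t Ht) as Hs. pose proof PI_RGT_0.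
 pose proof (energy2 t Ht) as E.
 rewrite RInt_plusR in E. 2: apply ex_RInt_scalR, nv2_ex. 2: apply ex_RInt_scalR, hh2_ex.
 rewrite (RInt_scalR (fun s => nv t s ^ 2)) in E by apply nv2_ex.
 rewrite (RInt_scalR (fun s => hh t s ^ 2)) in E by apply hh2_ex.
 assert (0 <= RInt (fun s => nv t s ^ 2) 0 (2 * PI)).
 { apply RInt_ge0R. lra. apply nv2_ex. intros; apply pow2_ge_0. }
 assert (0 <= RInt (fun s => hh t s ^ 2) 0 (2 * PI)).
 { apply RInt_ge0R. lra. apply hh2_ex. intros; apply pow2_ge_0. }
 set (N := RInt (fun s => nv t s ^ 2) 0 (2 * PI)) in *.
 set (HH := RInt (fun s => hh t s ^ 2) 0 (2 * PI)) in *.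
 assert (0 < sig t ^ 3) by (apply pow_lt; lra).
 assert (0 <= / sig t * N) by (apply Rmult_le_pos; [left; apply Rinv_0_lt_compat|]; lra).
 assert (0 <= A / sig t ^ 3 * HH) by (apply Rmult_le_pos; [left; apply Rdiv_lt_0_compat|]; lra).
 split.
 - apply Rmult_le_reg_l with (/ sig t). apply Rinv_0_lt_compat; lra.
   replace (/ sig t * (sig t * L ^ 2)) with (L ^ 2) by (field; lra). lra.
 - apply Rmult_le_reg_l with (A / sig t ^ 3). apply Rdiv_lt_0_compat; lra.
   replace (A / sig t ^ 3 * (sig t ^ 3 * L ^ 2 / A)) with (L ^ 2) by (field; lra). lra.
Qed.
Lemma habs_bound t : 0 <= t <= 1 ->
  RInt (fun v => Rabs (hh t v)) 0 (2 * PI) <= sqrt (2 * PI * (sig t ^ 3 * L ^ 2 / A)).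
Proof.
 intros Ht. pose proof PI_RGT_0. pose proof (sig_pos t Ht).
 replace (2 * PI) with (2 * PI - 0) at 2 by ring.
 apply amgm_int. lra. apply Rdiv_lt_0_compat; [apply Rmult_lt_0_compat; [apply pow_lt|apply pow_lt]|]; lra.
 apply exR_hh. apply hh2_ex. apply exR_habs. apply L2_bounds; auto.
Qed.

Lemma sqrt_sq x : 0 <= x -> sqrt x ^ 2 = x.
Proof. intros; rewrite <- Rsqr_pow2; apply Rsqr_sqrt; auto. Qed.

Lemma abs_le_of_sq x y : 0 <= y -> x ^ 2 <= y ^ 2 -> Rabs x <= y.
Proof. intros H1 H2. rewrite <- (pow2_abs x) in H2. pose proof (Rabs_pos x). nra. Qed.

Lemma sq_le_of_abs (x y : R) : Rabs x <= y -> x ^ 2 <= y ^ 2.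
Proof. intros H. rewrite <- (pow2_abs x). pose proof (Rabs_pos x). nra. Qed.

Lemma tv_sq_bound t s : 0 < t < 1 -> 0 <= s <= 2 * PI ->
  tv t s ^ 2 <= 8 * PI * (sig t ^ 3 * L ^ 2 / A).
Proof.
 intros Ht Hs. assert (Ht' : 0 <= t <= 1) by lra. pose proof PI_RGT_0. pose proof (sig_pos t Ht').
 assert (0 <= sig t ^ 3 * L ^ 2 / A) by (apply Rmult_le_pos; [apply Rmult_le_pos; apply pow_le|left; apply Rinv_0_lt_compat]; lra).
 pose proof (tv_bound t s Ht Hs). pose proof (habs_bound t Ht').
 pose proof (sqrt_pos (2 * PI * (sig t ^ 3 * L ^ 2 / A))).
 assert (Hq : sqrt (2 * PI * (sig t ^ 3 * L ^ 2 / A)) ^ 2 = 2 * PI * (sig t ^ 3 * L ^ 2 / A)).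
 { apply sqrt_sq. nra. }
 apply Rle_trans with ((2 * sqrt (2 * PI * (sig t ^ 3 * L ^ 2 / A))) ^ 2).
 apply sq_le_of_abs. lra. rewrite Rpow_mult_distr, Hq. lra.
Qed.

Lemma Cst_sq_bound t : 0 < t < 1 -> Cst t 0 ^ 2 <= (sig t ^ 3 * L ^ 2 / A) / (2 * PI).
Proof.
 intros Ht. assert (Ht' : 0 <= t <= 1) by lra. pose proof PI_RGT_0. pose proof (sig_pos t Ht').
 assert (0 <= sig t ^ 3 * L ^ 2 / A) by (apply Rmult_le_pos; [apply Rmult_le_pos; apply pow_le|left; apply Rinv_0_lt_compat]; lra).
 pose proof (tv_int t (2 * PI) Ht). rewrite tv_per, Htv0 in H2 by lra.
 assert (HC : Cst t 0 = - RInt (hh t) 0 (2 * PI) / (2 * PI)) by (field_simplify_eq; lra).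
 assert (H3 : Rabs (RInt (hh t) 0 (2 * PI)) <= sqrt (2 * PI * (sig t ^ 3 * L ^ 2 / A))).
 { eapply Rle_trans. apply abs_RInt_le. lra. apply exR_hh. apply habs_bound; auto. }
 apply sq_le_of_abs in H3. rewrite sqrt_sq in H3 by nra.
 rewrite HC. apply Rmult_le_reg_l with ((2 * PI) ^ 2). nra.
 replace ((2 * PI) ^ 2 * (- RInt (hh t) 0 (2 * PI) / (2 * PI)) ^ 2) with (RInt (hh t) 0 (2 * PI) ^ 2) by (field; lra).
 replace ((2 * PI) ^ 2 * (sig t ^ 3 * L ^ 2 / A / (2 * PI))) with (2 * PI * (sig t ^ 3 * L ^ 2 / A)) by (field; lra).
 simpl. lra.
Qed.

Lemma sig_der t : 0 <= t <= 1 -> is_derive sig t (Cst t 0 / sig t).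
Proof.
 intros Ht. unfold sig.
 assert (H : is_derive (fun u => S2 u 0) t (2 * Cst t 0)).
 { unfold S2, Cst. replace (2 * (Dx 0 1 t 0 * Dx 1 1 t 0 + Dy 0 1 t 0 * Dy 1 1 t 0)) with
     (2 * Dx 0 1 t 0 * Dx 1 1 t 0 + 2 * Dy 0 1 t 0 * Dy 1 1 t 0) by ring.
   apply der_plus; [apply (der_sq (fun u => Dx 0 1 u 0)) | apply (der_sq (fun u => Dy 0 1 u 0))]; [apply dxt|apply dyt]. }
 pose proof (is_derive_sqrt _ _ _ H (HS2pos t Ht)).
 replace (Cst t 0 / sqrt (S2 t 0)) with (2 * Cst t 0 / (2 * sqrt (S2 t 0))).
 exact H0. field. apply Rgt_not_eq, sqrt_lt_R0, HS2pos; auto.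
Qed.

Definition K0 := L / (2 * sqrt (2 * PI * A)).

Lemma ssig_der t : 0 <= t <= 1 ->
  is_derive (fun u => sqrt (sig u)) t (Cst t 0 / sig t / (2 * sqrt (sig t))).
Proof. intros Ht. apply is_derive_sqrt. apply sig_der; auto. apply sig_pos; auto. Qed.

Lemma ssig_der_bound t : 0 < t < 1 -> Rabs (Cst t 0 / sig t / (2 * sqrt (sig t))) <= K0.
Proof.
 intros Ht. assert (Ht' : 0 <= t <= 1) by lra. pose proof PI_RGT_0. pose proof (sig_pos t Ht') as Hs.
 pose proof (Cst_sq_bound t Ht) as HC.
 assert (Hss : 0 < sqrt (sig t)) by (apply sqrt_lt_R0; auto).
 assert (Hss2 : sqrt (sig t) * sqrt (sig t) = sig t) by (apply sqrt_sqrt; lra).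
 assert (HA2 : 0 < sqrt (2 * PI * A)) by (apply sqrt_lt_R0; nra).
 assert (HA3 : sqrt (2 * PI * A) * sqrt (2 * PI * A) = 2 * PI * A) by (apply sqrt_sqrt; nra).
 assert (HK : 0 < K0) by (unfold K0; apply Rdiv_lt_0_compat; lra).
 apply abs_le_of_sq. lra.
 replace ((Cst t 0 / sig t / (2 * sqrt (sig t))) ^ 2)
   with (Cst t 0 ^ 2 / (4 * sig t ^ 3)).
 2: { clear HC. set (q := sqrt (sig t)) in *. rewrite <- Hss2. field. lra. }
 replace (K0 ^ 2) with (L ^ 2 / (8 * PI * A)).
 2: { unfold K0. set (r := sqrt (2 * PI * A)) in *. replace (8 * PI * A) with (4 * (r * r)) by (rewrite HA3; ring). field. lra. }
 apply Rmult_le_reg_l with (4 * sig t ^ 3). assert (0 < sig t ^ 3) by (apply pow_lt; lra). lra.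
 replace (4 * sig t ^ 3 * (Cst t 0 ^ 2 / (4 * sig t ^ 3))) with (Cst t 0 ^ 2) by (field; lra).
 replace (4 * sig t ^ 3 * (L ^ 2 / (8 * PI * A))) with ((sig t ^ 3 * L ^ 2 / A) / (2 * PI)) by (field; lra).
 exact HC.
Qed.

Lemma ssig_cmp ta t : 0 <= ta -> ta <= t -> t <= 1 ->
  Rabs (sqrt (sig t) - sqrt (sig ta)) <= K0 * (t - ta).
Proof.
 intros H1 H2 H3. apply Rabs_le. split.
 - assert (- sqrt (sig t) - - sqrt (sig ta) <= K0 * (t - ta)).
   { apply (deriv_bound (fun u => - sqrt (sig u)) (fun u => - (Cst u 0 / sig u / (2 * sqrt (sig u))))).
     lra. intros x Hx. apply (is_derive_opp (fun u => sqrt (sig u))). apply ssig_der; lra.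
     intros x Hx. pose proof (ssig_der_bound x ltac:(lra)). apply Rabs_le_between in H. lra. }
   lra.
 - apply (deriv_bound (fun u => sqrt (sig u)) (fun u => Cst u 0 / sig u / (2 * sqrt (sig u)))).
   lra. intros x Hx. apply ssig_der; lra.
   intros x Hx. pose proof (ssig_der_bound x ltac:(lra)). apply Rabs_le_between in H. lra.
Qed.
Lemma cx2c i j t0 u v : continuity_2d_pt (fun _ v => Dx i j t0 v) u v.
Proof. intros eps. destruct (cx2 i j t0 v eps) as [d Hd]. exists d. intros u' v' _ Hv.
  apply Hd; auto. rewrite Rminus_eq_0, Rabs_R0; apply cond_pos. Qed.
Lemma cy2c i j t0 u v : continuity_2d_pt (fun _ v => Dy i j t0 v) u v.
Proof. intros eps. destruct (cy2 i j t0 v eps) as [d Hd]. exists d. intros u' v' _ Hv.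
  apply Hd; auto. rewrite Rminus_eq_0, Rabs_R0; apply cond_pos. Qed.

Ltac c2dE := repeat first [ apply continuity_2d_pt_plus | apply continuity_2d_pt_minus
  | apply continuity_2d_pt_mult | apply continuity_2d_pt_opp | apply c2d_pow
  | apply continuity_2d_pt_const | apply cx2 | apply cy2 | apply cx2c | apply cy2c ].

Definition Dist t1 s1 t2 s2 :=
  sqrt ((Dx 0 0 t1 s1 - Dx 0 0 t2 s2) ^ 2 + (Dy 0 0 t1 s1 - Dy 0 0 t2 s2) ^ 2).

Lemma dist2_Dist t1 s1 t2 s2 : dist2 (c t1 s1) (c t2 s2) = Dist t1 s1 t2 s2.
Proof. unfold dist2, Dist. rewrite <- !cxE, <- !cyE. reflexivity. Qed.

Lemma sqrt_le_of X S : 0 <= S -> X <= S ^ 2 -> sqrt X <= S.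
Proof. intros H1 H2. rewrite <- (sqrt_pow2 S H1). apply sqrt_le_1_alt. exact H2. Qed.

Lemma minkowski a b c0 d : sqrt ((a + b) ^ 2 + (c0 + d) ^ 2) <= sqrt (a ^ 2 + c0 ^ 2) + sqrt (b ^ 2 + d ^ 2).
Proof.
 assert (H1 : 0 <= a ^ 2 + c0 ^ 2) by nra. assert (H2 : 0 <= b ^ 2 + d ^ 2) by nra.
 pose proof (sqrt_pos (a ^ 2 + c0 ^ 2)). pose proof (sqrt_pos (b ^ 2 + d ^ 2)).
 assert (E1 := sqrt_sq _ H1). assert (E2 := sqrt_sq _ H2).
 assert (CS : a * b + c0 * d <= sqrt (a ^ 2 + c0 ^ 2) * sqrt (b ^ 2 + d ^ 2)).
 { apply Rle_trans with (Rabs (a * b + c0 * d)). apply Rle_abs.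
   apply abs_le_of_sq. apply Rmult_le_pos; auto. rewrite Rpow_mult_distr, E1, E2.
   pose proof (pow2_ge_0 (a * d - b * c0)). nra. }
 apply sqrt_le_of. lra. nra.
Qed.

Lemma Dist_tri t1 s1 t2 s2 t3 s3 : Dist t1 s1 t3 s3 <= Dist t1 s1 t2 s2 + Dist t2 s2 t3 s3.
Proof. unfold Dist.
  replace (Dx 0 0 t1 s1 - Dx 0 0 t3 s3) with ((Dx 0 0 t1 s1 - Dx 0 0 t2 s2) + (Dx 0 0 t2 s2 - Dx 0 0 t3 s3)) by ring.
  replace (Dy 0 0 t1 s1 - Dy 0 0 t3 s3) with ((Dy 0 0 t1 s1 - Dy 0 0 t2 s2) + (Dy 0 0 t2 s2 - Dy 0 0 t3 s3)) by ring.
  apply minkowski. Qed.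

Lemma Dist_sym t1 s1 t2 s2 : Dist t1 s1 t2 s2 = Dist t2 s2 t1 s1.
Proof. unfold Dist. f_equal. ring. Qed.

Lemma lip_aux t a b : 0 <= t <= 1 -> a <= b -> Dist t b t a <= sig t * (b - a).
Proof.
 intros Ht Hab. pose proof (sig_pos t Ht) as Hs.
 set (dx := Dx 0 0 t b - Dx 0 0 t a). set (dy := Dy 0 0 t b - Dy 0 0 t a).
 assert (Hd0 : 0 <= dx ^ 2 + dy ^ 2) by nra.
 unfold Dist. fold dx dy. set (d := sqrt (dx ^ 2 + dy ^ 2)).
 assert (Hd : 0 <= d) by apply sqrt_pos.
 destruct (Req_dec d 0) as [E|Hne]. rewrite E. nra.
 assert (Hdp : 0 < d) by lra. assert (Hd2 : d ^ 2 = dx ^ 2 + dy ^ 2) by apply sqrt_sq, Hd0.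
 set (u1 := dx / d). set (u2 := dy / d).
 assert (Hu : u1 ^ 2 + u2 ^ 2 = 1) by (unfold u1, u2; field_simplify; [rewrite <- Hd2; field|]; lra).
 assert (Hg : (u1 * Dx 0 0 t b + u2 * Dy 0 0 t b) - (u1 * Dx 0 0 t a + u2 * Dy 0 0 t a) = d).
 { replace ((u1 * Dx 0 0 t b + u2 * Dy 0 0 t b) - (u1 * Dx 0 0 t a + u2 * Dy 0 0 t a)) with (u1 * dx + u2 * dy)
     by (unfold dx, dy; ring). unfold u1, u2. replace (dx / d * dx + dy / d * dy) with ((dx ^ 2 + dy ^ 2) / d) by (field; lra).
   rewrite <- Hd2. field. lra. }
 rewrite <- Hg.
 apply (deriv_bound (fun s => u1 * Dx 0 0 t s + u2 * Dy 0 0 t s) (fun s => u1 * Dx 0 1 t s + u2 * Dy 0 1 t s)).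
 - auto.
 - intros x _. apply der_plus; (apply (is_derive_scal (fun s => _)) ; [apply dxs || apply dys]).
 - intros x _. pose proof (S2_sig t x Ht) as HS. unfold S2 in HS.
   apply Rle_trans with (Rabs (u1 * Dx 0 1 t x + u2 * Dy 0 1 t x)). apply Rle_abs.
   apply abs_le_of_sq. lra. rewrite <- HS.
   pose proof (pow2_ge_0 (u1 * Dy 0 1 t x - u2 * Dx 0 1 t x)).
   replace (Dx 0 1 t x ^ 2 + Dy 0 1 t x ^ 2) with ((u1 ^ 2 + u2 ^ 2) * (Dx 0 1 t x ^ 2 + Dy 0 1 t x ^ 2)) by (rewrite Hu; ring).
   nra.
Qed.
Lemma lip t a b : 0 <= t <= 1 -> Dist t a t b <= sig t * Rabs (a - b).
Proof.
 intros Ht. destruct (Rle_dec a b).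
 - rewrite Dist_sym, Rabs_minus_sym, Rabs_right by lra. apply lip_aux; auto.
 - rewrite Rabs_right by lra. apply lip_aux; auto. lra.
Qed.

Section Win.
Variables ta al be : R.

Definition fG T s := (Dx 0 0 T s - Dx 0 0 ta s) ^ 2 + (Dy 0 0 T s - Dy 0 0 ta s) ^ 2.
Definition dG T s := 2 * (Dx 0 0 T s - Dx 0 0 ta s) * Dx 1 0 T s + 2 * (Dy 0 0 T s - Dy 0 0 ta s) * Dy 1 0 T s.
Definition GG T := RInt (fun s => fG T s) al be.
Definition Psi T := RInt (fun s => Dx 1 0 T s ^ 2 + Dy 1 0 T s ^ 2) al be.

Lemma fG_der T s : is_derive (fun u => fG u s) T (dG T s).
Proof.
 unfold fG, dG. apply der_plus.
 - apply (der_sq (fun u => Dx 0 0 u s - Dx 0 0 ta s)).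
   replace (Dx 1 0 T s) with (Dx 1 0 T s - 0) by ring. apply der_minus. apply dxt. apply der_const.
 - apply (der_sq (fun u => Dy 0 0 u s - Dy 0 0 ta s)).
   replace (Dy 1 0 T s) with (Dy 1 0 T s - 0) by ring. apply der_minus. apply dyt. apply der_const.
Qed.

Lemma dG_c2 u v : continuity_2d_pt dG u v.
Proof. unfold dG. apply (continuity_2d_pt_ext (fun u v =>
  2 * (Dx 0 0 u v - Dx 0 0 ta v) * Dx 1 0 u v + 2 * (Dy 0 0 u v - Dy 0 0 ta v) * Dy 1 0 u v)).
  reflexivity. c2dE. Qed.
Lemma fG_c2 u v : continuity_2d_pt fG u v.
Proof. unfold fG. apply (continuity_2d_pt_ext (fun u v =>
  (Dx 0 0 u v - Dx 0 0 ta v) ^ 2 + (Dy 0 0 u v - Dy 0 0 ta v) ^ 2)).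
  reflexivity. c2dE. Qed.

Lemma GG_der T : is_derive GG T (RInt (fun s => dG T s) al be).
Proof.
 unfold GG.
 assert (H := is_derive_RInt_param fG al be T).
 rewrite (RInt_ext (fun t => Derive (fun u => fG u t) T) (fun s => dG T s)) in H.
 apply H.
 - apply filter_forall. intros x t _. exists (dG x t). apply fG_der.
 - intros t _. apply (continuity_2d_pt_ext dG). intros; symmetry; apply is_derive_unique, fG_der.
   apply dG_c2.
 - apply filter_forall. intros y. apply (exR fG). apply fG_c2.
 - intros x _. apply is_derive_unique, fG_der.
Qed.

Hypothesis Hab : al <= be.

Lemma GG_ge0 T : 0 <= GG T.
Proof. apply RInt_ge0R; auto. apply (exR fG), fG_c2. intros; unfold fG; apply Rplus_le_le_0_compat; apply pow2_ge_0. Qed.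

Lemma GG_ta : GG ta = 0.
Proof. unfold GG. rewrite (RInt_ext _ (fun _ => 0)). rewrite RInt_constR. apply Rmult_0_r.
  intros; unfold fG; change (@eq R ((Dx 0 0 ta x - Dx 0 0 ta x) ^ 2 + (Dy 0 0 ta x - Dy 0 0 ta x) ^ 2) 0); ring. Qed.

Lemma Psi_ex T : ex_RInt (fun s => Dx 1 0 T s ^ 2 + Dy 1 0 T s ^ 2) al be.
Proof. apply (exR (fun u v => Dx 1 0 u v ^ 2 + Dy 1 0 u v ^ 2)). intros; c2dE. Qed.

Lemma dG_bound T lam : 0 < lam -> RInt (fun s => dG T s) al be <= lam * GG T + / lam * Psi T.
Proof.
 intros Hl.
 assert (E1 : ex_RInt (fun s => fG T s) al be) by (apply (exR fG), fG_c2).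
 assert (E2 := Psi_ex T).
 assert (E : lam * GG T + / lam * Psi T =
   RInt (fun s => lam * fG T s + / lam * (Dx 1 0 T s ^ 2 + Dy 1 0 T s ^ 2)) al be).
 { rewrite (RInt_plusR (fun s => lam * fG T s) (fun s => / lam * (Dx 1 0 T s ^ 2 + Dy 1 0 T s ^ 2))).
   rewrite (RInt_scalR (fun s => fG T s)) by exact E1.
   rewrite (RInt_scalR (fun s => Dx 1 0 T s ^ 2 + Dy 1 0 T s ^ 2)) by exact E2. reflexivity.
   apply ex_RInt_scalR, E1. apply ex_RInt_scalR, E2. }
 rewrite E. apply RInt_leR; auto. apply (exR dG), dG_c2.
 apply ex_RInt_plusR; apply ex_RInt_scalR; auto.
 intros x _. unfold dG, fG.
 set (a1 := Dx 0 0 T x - Dx 0 0 ta x). set (a2 := Dy 0 0 T x - Dy 0 0 ta x).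
 set (b1 := Dx 1 0 T x). set (b2 := Dy 1 0 T x).
 assert (0 <= (lam * a1 - b1) ^ 2 + (lam * a2 - b2) ^ 2) by (apply Rplus_le_le_0_compat; apply pow2_ge_0).
 apply Rmult_le_reg_l with lam. auto.
 replace (lam * (lam * (a1 ^ 2 + a2 ^ 2) + / lam * (b1 ^ 2 + b2 ^ 2))) with
   (lam ^ 2 * (a1 ^ 2 + a2 ^ 2) + (b1 ^ 2 + b2 ^ 2)) by (field; lra).
 match goal with |- ?l <= ?r => assert (r - l = (lam*a1-b1)^2 + (lam*a2-b2)^2) by ring end. lra.
Qed.
Lemma G_end tb K : ta < tb -> 0 < K -> (forall T, ta < T < tb -> Psi T <= K ^ 2) ->
  GG tb <= (K * (tb - ta)) ^ 2.
Proof.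
 intros Htab HK HPsi.
 assert (Heps : forall eps, 0 < eps -> sqrt (GG tb + eps) - sqrt eps <= K * (tb - ta)).
 { intros eps He.
   replace (sqrt eps) with (sqrt (GG ta + eps)) by (rewrite GG_ta; f_equal; ring).
   apply (deriv_bound (fun T => sqrt (GG T + eps))
           (fun T => RInt (fun s => dG T s) al be / (2 * sqrt (GG T + eps)))).
   lra.
   - intros x _. apply (is_derive_sqrt (fun T => GG T + eps)).
     replace (RInt (fun s => dG x s) al be) with (RInt (fun s => dG x s) al be + 0) by ring.
     apply der_plus. apply GG_der. apply der_const.
     pose proof (GG_ge0 x). lra.
   - intros x Hx. pose proof (GG_ge0 x) as Hg.
     set (s := sqrt (GG x + eps)).
     assert (Hs : 0 < s) by (apply sqrt_lt_R0; lra).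
     assert (Hs2 : s * s = GG x + eps) by (apply sqrt_sqrt; lra).
     pose proof (dG_bound x (K / s) ltac:(apply Rdiv_lt_0_compat; lra)) as Hd.
     pose proof (HPsi x Hx) as Hp.
     assert (H1 : / (K / s) * Psi x <= s * K).
     { replace (/ (K / s)) with (s / K) by (field; lra).
       apply Rle_trans with (s / K * K ^ 2).
       apply Rmult_le_compat_l. apply Rlt_le, Rdiv_lt_0_compat; lra. exact Hp.
       right. field. lra. }
     assert (H2 : K / s * GG x <= K * s).
     { apply Rmult_le_reg_l with s. auto.
       replace (s * (K / s * GG x)) with (K * GG x) by (field; lra).
       replace (s * (K * s)) with (K * (s * s)) by ring. rewrite Hs2. nra. }
     apply Rmult_le_reg_l with (2 * s). lra.
     assert (Hr : forall r : R, 2 * s * (r / (2 * s)) = r) by (intros; field; lra).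
     rewrite Hr. lra. }
 set (G := GG tb). pose proof (GG_ge0 tb) as HG. fold G in HG.
 set (Q := (K * (tb - ta)) ^ 2). assert (HQ0 : 0 <= K * (tb - ta)) by nra.
 destruct (Rle_dec G Q) as [h|h]. auto. exfalso.
 set (x := (G - Q) / (4 * (K * (tb - ta)) + 1)).
 assert (Hx : 0 < x) by (apply Rdiv_lt_0_compat; lra).
 pose proof (Heps (x ^ 2) ltac:(nra)) as H.
 rewrite sqrt_pow2 in H by lra. fold G in H.
 assert (H2 : sqrt (G + x ^ 2) ^ 2 <= (x + K * (tb - ta)) ^ 2).
 { apply pow_incr. split. apply sqrt_pos. lra. }
 rewrite sqrt_sq in H2 by nra.
 assert (H3 : G - Q <= 2 * (K * (tb - ta)) * x) by (unfold Q; nra).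
 assert (H4 : x * (4 * (K * (tb - ta)) + 1) = G - Q) by (unfold x; field; lra).
 nra.
Qed.

Hypothesis Hal : 0 <= al.
Hypothesis Hbe : be <= 2 * PI.

Lemma tv2_ex t a b : ex_RInt (fun s => tv t s ^ 2) a b.
Proof. apply (exR (fun u v => tv u v ^ 2)). intros; apply c2d_pow, tv_c2. Qed.

Lemma Psi_bound T : 0 < T < 1 -> Psi T <= (be - al) * (8 * PI * (sig T ^ 3 * L ^ 2 / A)) / sig T ^ 2 + L ^ 2 / sig T.
Proof.
 intros HT. assert (HT' : 0 <= T <= 1) by lra. pose proof (sig_pos T HT') as Hs. pose proof PI_RGT_0.
 assert (Hs2 : 0 < sig T ^ 2) by (apply pow_lt; lra).
 unfold Psi.
 rewrite (RInt_ext _ (fun s => / sig T ^ 2 * tv T s ^ 2 + / sig T ^ 2 * nv T s ^ 2)).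
 2: { intros x _. change (@eq R (Dx 1 0 T x ^ 2 + Dy 1 0 T x ^ 2) (/ sig T ^ 2 * tv T x ^ 2 + / sig T ^ 2 * nv T x ^ 2)).
      pose proof (S2_sig T x HT') as HS. unfold S2 in HS. rewrite <- HS. unfold tv, nv.
      field. rewrite HS; lra. }
 rewrite (RInt_plusR (fun s => / sig T ^ 2 * tv T s ^ 2) (fun s => / sig T ^ 2 * nv T s ^ 2)).
 2: apply ex_RInt_scalR, tv2_ex. 2: apply ex_RInt_scalR, nv2_ex.
 rewrite (RInt_scalR (fun s => tv T s ^ 2)) by apply tv2_ex.
 rewrite (RInt_scalR (fun s => nv T s ^ 2)) by apply nv2_ex.
 assert (H1 : RInt (fun s => tv T s ^ 2) al be <= (be - al) * (8 * PI * (sig T ^ 3 * L ^ 2 / A))).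
 { rewrite <- RInt_constR. apply RInt_leR; auto. apply tv2_ex. apply ex_RInt_const.
   intros x Hx. apply tv_sq_bound; auto. lra. }
 assert (H2 : RInt (fun s => nv T s ^ 2) al be <= sig T * L ^ 2).
 { apply Rle_trans with (RInt (fun s => nv T s ^ 2) 0 (2 * PI)). 2: apply (proj1 (L2_bounds T HT')).
   rewrite <- (RInt_Chasles (fun s => nv T s ^ 2) 0 al (2 * PI)) by apply nv2_ex.
   rewrite <- (RInt_Chasles (fun s => nv T s ^ 2) al be (2 * PI)) by apply nv2_ex.
   repeat change (plus ?a ?b) with (a + b).
   assert (0 <= RInt (fun s => nv T s ^ 2) 0 al) by (apply RInt_ge0R; [lra|apply nv2_ex|intros; apply pow2_ge_0]).
   assert (0 <= RInt (fun s => nv T s ^ 2) be (2 * PI)) by (apply RInt_ge0R; [lra|apply nv2_ex|intros; apply pow2_ge_0]).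
   lra. }
 assert (Hi : 0 < / sig T ^ 2) by (apply Rinv_0_lt_compat; lra).
 apply Rle_trans with (/ sig T ^ 2 * ((be - al) * (8 * PI * (sig T ^ 3 * L ^ 2 / A))) + / sig T ^ 2 * (sig T * L ^ 2)).
 apply Rplus_le_compat; apply Rmult_le_compat_l; lra.
 right. field. lra.
Qed.
End Win.
Lemma D_window ta tb th al be K2 : 0 <= ta -> ta < tb -> tb <= 1 ->
  0 <= al -> al < be -> be <= 2 * PI -> al <= th <= be -> 0 < K2 ->
  (forall T, ta < T < tb -> Psi al be T <= K2) ->
  Dist ta th tb th <= (sig ta + sig tb) * (be - al) \/
  (be - al) * (Dist ta th tb th - (sig ta + sig tb) * (be - al)) ^ 2 <= K2 * (tb - ta) ^ 2.
Proof.
 intros H1 H2 H3 H4 H5 H6 H7 HK HP.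
 set (S := sig ta + sig tb). set (D := Dist ta th tb th).
 destruct (Rle_dec D (S * (be - al))) as [h|h]. left; auto. right.
 assert (HG : GG ta al be tb <= (sqrt K2 * (tb - ta)) ^ 2).
 { apply G_end. lra. lra. apply sqrt_lt_R0; lra.
   intros T HT. rewrite sqrt_sq by lra. apply HP; auto. }
 rewrite Rpow_mult_distr, sqrt_sq in HG by lra.
 eapply Rle_trans. 2: exact HG.
 unfold GG. rewrite <- RInt_constR. apply RInt_leR. lra. apply ex_RInt_const. apply (exR (fG ta)), fG_c2.
 intros s Hs. unfold fG.
 assert (E : (Dx 0 0 tb s - Dx 0 0 ta s) ^ 2 + (Dy 0 0 tb s - Dy 0 0 ta s) ^ 2 = Dist ta s tb s ^ 2).
 { unfold Dist. rewrite sqrt_sq by (apply Rplus_le_le_0_compat; apply pow2_ge_0). ring. }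
 rewrite E.
 assert (Hl : D - S * (be - al) <= Dist ta s tb s).
 { assert (T1 := Dist_tri ta th ta s tb th). assert (T2 := Dist_tri ta s tb s tb th).
   assert (L1 := lip ta th s ltac:(lra)). assert (L2 := lip tb s th ltac:(lra)).
   assert (Rabs (th - s) <= be - al) by (apply Rabs_le; lra).
   assert (Rabs (s - th) <= be - al) by (apply Rabs_le; lra).
   pose proof (sig_pos ta ltac:(lra)). pose proof (sig_pos tb ltac:(lra)).
   unfold D, S. nra. }
 apply pow_incr. lra.
Qed.
Lemma pow4_le_inv a b : 0 <= b -> a ^ 4 <= b ^ 4 -> a <= b.
Proof. intros Hb H. destruct (Rle_dec a b) as [h|h]; auto. exfalso.
  assert (b < a) by lra.
  assert (E : a ^ 4 - b ^ 4 = (a - b) * ((a + b) * (a ^ 2 + b ^ 2))) by ring.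
  assert (0 < (a - b) * ((a + b) * (a ^ 2 + b ^ 2))).
  { apply Rmult_lt_0_compat. lra. apply Rmult_lt_0_compat. lra.
    assert (0 < a ^ 2) by (apply pow_lt; lra). pose proof (pow2_ge_0 b). lra. }
  lra. Qed.

Lemma root8 l : 0 < l -> exists w, 0 < w /\ w ^ 8 = l.
Proof. intros Hl. exists (sqrt (sqrt (sqrt l))).
  assert (0 < sqrt l) by (apply sqrt_lt_R0; lra).
  assert (0 < sqrt (sqrt l)) by (apply sqrt_lt_R0; lra).
  split. apply sqrt_lt_R0; lra.
  replace 8%nat with (2 * 2 * 2)%nat by reflexivity. rewrite !pow_mult.
  rewrite !sqrt_sq; lra. Qed.

Lemma root4 l : 0 < l -> exists w, 0 < w /\ w ^ 4 = l /\ w ^ 2 = sqrt l /\ w = sqrt (sqrt l).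
Proof. intros Hl.
  assert (H1 : 0 < sqrt l) by (apply sqrt_lt_R0; lra).
  assert (H2 : 0 < sqrt (sqrt l)) by (apply sqrt_lt_R0; lra).
  exists (sqrt (sqrt l)).
  assert (E2 : sqrt (sqrt l) ^ 2 = sqrt l) by (apply sqrt_sq; lra).
  assert (E1 : sqrt l ^ 2 = l) by (apply sqrt_sq; lra).
  repeat split; auto.
  replace 4%nat with (2 * 2)%nat by reflexivity. rewrite pow_mult, E2, E1. reflexivity. Qed.

Lemma D_bound ta tb th lmax lmin :
  0 <= ta -> ta < tb -> tb <= 1 -> 0 <= th <= 2 * PI -> 0 < lmin ->
  (forall t, 0 <= t <= 1 -> 2 * PI * sig t <= lmax) ->
  (forall t, 0 <= t <= 1 -> lmin <= 2 * PI * sig t) ->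
  (L * (tb - ta)) ^ 2 <= A * lmin / 16 -> (L * (tb - ta)) ^ 2 <= lmin ^ 3 / 64 ->
  Dist ta th tb th <= 4 * sqrt (sqrt lmax) * sqrt (L * (tb - ta)) + 2 * (L * (tb - ta)) * sqrt (lmax / A).
Proof.
 intros Hta Htab Htb Hth Hlmin Hmax Hmin HX1 HX2.
 pose proof PI_RGT_0 as HPI. pose proof PI_4 as HPI4.
 assert (HPI3 : 3 < PI) by (pose proof PI2_3_2; lra).
 set (X := L * (tb - ta)) in *. assert (HX : 0 < X) by (unfold X; nra).
 set (lam := sig ta). assert (Hlam : 0 < lam) by (apply sig_pos; lra).
 assert (Hlml : lmin <= 2 * PI * lam) by (apply Hmin; lra).
 assert (Hlmx : 2 * PI * lam <= lmax) by (apply Hmax; lra).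
 destruct (root8 lam Hlam) as [w [Hw Ew]].
 destruct (root4 X HX) as [x [Hx [Ex [Ex2 _]]]].
 destruct (root4 lmax ltac:(nra)) as [m [Hm [Em [Em2 Em3]]]].
 assert (Hw6 : 0 < w ^ 6) by (apply pow_lt; lra).
 set (de := x ^ 2 / w ^ 6).
 assert (Hde : 0 < de) by (unfold de; apply Rdiv_lt_0_compat; [apply pow_lt|]; lra).
 assert (Ede : de * w ^ 6 = x ^ 2) by (unfold de; field; lra).
 assert (Hd4 : de ^ 4 * lam ^ 3 = X ^ 2).
 { rewrite <- Ew, <- Ex. replace (x ^ 4) with ((de * w ^ 6) ^ 2) by (rewrite Ede; ring). ring. }
 assert (Hl3 : lmin ^ 3 <= (2 * PI * lam) ^ 3) by (apply pow_incr; lra).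
 assert (Hlam3 : 0 < lam ^ 3) by (apply pow_lt; lra).
 assert (Hd4b : de ^ 4 <= 8).
 { apply Rmult_le_reg_r with (lam ^ 3). auto. rewrite Hd4.
   assert (PI ^ 3 <= 4 ^ 3) by (apply pow_incr; lra).
   replace ((2 * PI * lam) ^ 3) with (8 * PI ^ 3 * lam ^ 3) in Hl3 by ring.
   nra. }
 assert (Hd94 : de <= 9 / 4).
 { apply pow4_le_inv. lra. lra. }
 assert (HK0 : (K0 * (tb - ta)) ^ 2 <= lam / 64).
 { unfold K0. assert (Hs : 0 < sqrt (2 * PI * A)) by (apply sqrt_lt_R0; nra).
   assert (Es : sqrt (2 * PI * A) ^ 2 = 2 * PI * A) by (apply sqrt_sq; nra).
   replace ((L / (2 * sqrt (2 * PI * A)) * (tb - ta)) ^ 2) with (X ^ 2 / (4 * sqrt (2 * PI * A) ^ 2))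
     by (unfold X; field; lra).
   rewrite Es. apply Rmult_le_reg_r with (8 * PI * A). nra.
   replace (X ^ 2 / (4 * (2 * PI * A)) * (8 * PI * A)) with (X ^ 2) by (field; nra).
   nra. }
 assert (Hr1 : 0 < sqrt lam) by (apply sqrt_lt_R0; lra).
 assert (Er1 : sqrt lam ^ 2 = lam) by (apply sqrt_sq; lra).
 assert (HK0' : K0 * (tb - ta) <= sqrt lam / 8).
 { apply Rle_trans with (Rabs (K0 * (tb - ta))). apply Rle_abs. apply abs_le_of_sq. lra. nra. }
 assert (Hcmp : forall T, ta <= T <= tb -> 49 / 64 * lam <= sig T <= 81 / 64 * lam).
 { intros T HT. pose proof (ssig_cmp ta T Hta (proj1 HT) ltac:(lra)) as Hc.
   assert (K0 * (T - ta) <= K0 * (tb - ta)).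
   { apply Rmult_le_compat_l. unfold K0. apply Rlt_le, Rdiv_lt_0_compat. lra.
     assert (0 < sqrt (2 * PI * A)) by (apply sqrt_lt_R0; nra). lra. lra. }
   apply Rabs_le_between in Hc. fold lam in Hc.
   assert (Hs : 0 < sig T) by (apply sig_pos; lra).
   assert (Es : sqrt (sig T) ^ 2 = sig T) by (apply sqrt_sq; lra).
   pose proof (sqrt_pos (sig T)).
   assert (7 / 8 * sqrt lam <= sqrt (sig T) <= 9 / 8 * sqrt lam) by lra.
   split; rewrite <- Es, <- Er1; nra. }
 assert (Hdpi : de <= PI) by lra.
 set (K2 := de * 4 * lmax * L ^ 2 / A + 64 / 49 * L ^ 2 / lam).
 assert (Hlmp : 0 < lmax) by nra.
 assert (HL2 : 0 < L ^ 2) by (apply pow_lt; lra).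
 assert (HK2 : 0 < K2).
 { unfold K2. assert (0 < de * 4 * lmax * L ^ 2 / A) by (apply Rdiv_lt_0_compat; [|lra]; apply Rmult_lt_0_compat; [apply Rmult_lt_0_compat; [apply Rmult_lt_0_compat|]|]; lra).
   assert (0 < 64 / 49 * L ^ 2 / lam) by (apply Rdiv_lt_0_compat; lra). lra. }
 assert (Hwin : exists al be, 0 <= al /\ be = al + de /\ be <= 2 * PI /\ al <= th <= be).
 { destruct (Rle_dec (th + de) (2 * PI)).
   - exists th, (th + de). repeat split; lra.
   - exists (th - de), th. repeat split; lra. }
 destruct Hwin as [al [be [Hal [Ebe [Hbe Hthw]]]]].
 assert (Hbd : be - al = de) by lra.
 assert (HPsi : forall T, ta < T < tb -> Psi al be T <= K2).
 { intros T HT. assert (HT01 : 0 < T < 1) by lra.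
   eapply Rle_trans. apply Psi_bound; auto; lra.
   assert (Hs : 0 < sig T) by (apply sig_pos; lra).
   destruct (Hcmp T ltac:(lra)) as [Hc1 Hc2].
   assert (HsT : 2 * PI * sig T <= lmax) by (apply Hmax; lra).
   rewrite Hbd. unfold K2.
   replace (de * (8 * PI * (sig T ^ 3 * L ^ 2 / A)) / sig T ^ 2) with (de * 4 * (2 * PI * sig T) * L ^ 2 / A) by (field; lra).
   apply Rplus_le_compat.
   - unfold Rdiv. apply Rmult_le_compat_r. left; apply Rinv_0_lt_compat; lra.
     apply Rmult_le_compat_r. nra. apply Rmult_le_compat_l. lra. lra.
   - apply Rmult_le_reg_r with (sig T * lam). nra.
     replace (L ^ 2 / sig T * (sig T * lam)) with (L ^ 2 * lam) by (field; lra).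
     replace (64 / 49 * L ^ 2 / lam * (sig T * lam)) with (64 / 49 * L ^ 2 * sig T) by (field; lra).
     nra. }
 assert (HW := D_window ta tb th al be K2 Hta Htab Htb Hal ltac:(lra) Hbe Hthw HK2 HPsi).
 rewrite Hbd in HW.
 set (D := Dist ta th tb th) in *.
 set (S := sig ta + sig tb) in *.
 assert (HS : S <= 145 / 64 * lam) by (destruct (Hcmp tb ltac:(lra)); unfold S, lam in *; lra).
 assert (Hlde : lam * de = w ^ 2 * x ^ 2) by (rewrite <- Ew, <- Ede; ring).
 assert (HSd : S * de <= 145 / 64 * (w ^ 2 * x ^ 2)) by (rewrite <- Hlde; nra).
 assert (Hwm : w ^ 2 <= m).
 { apply pow4_le_inv. lra. rewrite Em. replace ((w ^ 2) ^ 4) with (w ^ 8) by ring. nra. }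
 assert (HA2 : sqrt (lmax / A) ^ 2 = lmax / A) by (apply sqrt_sq; apply Rlt_le, Rdiv_lt_0_compat; nra).
 set (T3 := 2 * X * sqrt (lmax / A)).
 assert (HT3 : 0 <= T3) by (unfold T3; pose proof (sqrt_pos (lmax / A)); nra).
 set (T1 := 12 / 7 * (w ^ 2 * x ^ 2)).
 assert (HT1 : 0 <= T1) by (unfold T1; nra).
 assert (Hx2 : x ^ 2 <= 9 / 4 * w ^ 6) by (rewrite <- Ede; nra).
 assert (Hfin : D <= S * de + T1 + T3).
 { destruct HW as [HW|HW]. lra.
   destruct (Rle_dec D (S * de)) as [h|h]. lra.
   assert (Hq : (D - S * de) ^ 2 <= (T1 + T3) ^ 2).
   { apply Rmult_le_reg_l with de. auto. eapply Rle_trans. exact HW.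
     unfold K2.
     replace ((de * 4 * lmax * L ^ 2 / A + 64 / 49 * L ^ 2 / lam) * (tb - ta) ^ 2)
       with (de * (4 * X ^ 2 * (lmax / A)) + 64 / 49 * X ^ 2 / lam) by (unfold X; field; lra).
     rewrite <- HA2.
     assert (E3 : 64 / 49 * X ^ 2 / lam <= de * T1 ^ 2).
     { unfold T1. rewrite <- Ex, <- Ew.
       replace (de * (12 / 7 * (w ^ 2 * x ^ 2)) ^ 2) with (144 / 49 * (de * w ^ 6) * x ^ 4 / w ^ 2) by (field; lra).
       rewrite Ede. apply Rmult_le_reg_r with (w ^ 8). apply pow_lt; lra.
       replace (64 / 49 * (x ^ 4) ^ 2 / w ^ 8 * w ^ 8) with (64 / 49 * x ^ 8) by (field; lra).
       replace (144 / 49 * x ^ 2 * x ^ 4 / w ^ 2 * w ^ 8) with (144 / 49 * x ^ 6 * w ^ 6) by (field; lra).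
       assert (0 < x ^ 6) by (apply pow_lt; lra).
       replace (x ^ 8) with (x ^ 6 * x ^ 2) by ring. nra. }
     assert (E4 : de * (T1 + T3) ^ 2 = de * T1 ^ 2 + de * (4 * X ^ 2 * sqrt (lmax / A) ^ 2) + 2 * de * T1 * T3)
       by (unfold T3; ring).
     rewrite E4. assert (0 <= 2 * de * T1 * T3) by (apply Rmult_le_pos; [apply Rmult_le_pos|]; lra).
     lra. }
   assert (D - S * de <= T1 + T3).
   { apply pow4_le_inv. lra.
     replace 4%nat with (2 * 2)%nat by reflexivity. rewrite !pow_mult.
     apply pow_incr. split. apply pow2_ge_0. lra. }
   lra. }
 rewrite <- Ex2, <- Em3. fold T3.
 assert (4 * (w ^ 2 * x ^ 2) <= 4 * m * x ^ 2) by (assert (0 < x ^ 2) by (apply pow_lt; lra); nra).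
 assert (0 <= w ^ 2 * x ^ 2) by (apply Rmult_le_pos; apply pow2_ge_0).
 unfold T1 in Hfin. lra.
Qed.
Lemma S2_from (Hsp : forall t s, 0 <= t <= 1 -> speed c t s = len c t / (2 * PI)) :
  forall t s, 0 <= t <= 1 -> S2 t s = S2 t 0.
Proof.
 intros t s Ht. assert (E : speed c t s = speed c t 0) by (rewrite !Hsp; auto).
 unfold speed in E. rewrite !dthx, !dthy in E. fold (S2 t s) (S2 t 0) in E.
 apply sqrt_inj; auto; unfold S2; apply Rplus_le_le_0_compat; apply pow2_ge_0.
Qed.

Lemma S2pos_from (Himm : forall t, 0 <= t <= 1 -> immersion_at c t) :
  forall t, 0 <= t <= 1 -> 0 < S2 t 0.
Proof.
 intros t Ht. pose proof (Himm t Ht 0) as H. rewrite dthx, dthy in H. unfold S2.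
 destruct (Req_dec (Dx 0 1 t 0) 0) as [h1|h1].
 - assert (Dy 0 1 t 0 <> 0) by (intro h2; apply H; rewrite h1, h2; auto).
   pose proof (pow2_ge_0 (Dx 0 1 t 0)). assert (0 < Dy 0 1 t 0 ^ 2) by (apply pow2_gt_0; auto). lra.
 - pose proof (pow2_ge_0 (Dy 0 1 t 0)). assert (0 < Dx 0 1 t 0 ^ 2) by (apply pow2_gt_0; auto). lra.
Qed.

Lemma tv0_from (Htang : forall t, 0 <= t <= 1 -> tang_vel c t 0 = 0) :
  forall t, 0 <= t <= 1 -> tv t 0 = 0.
Proof. intros t Ht. unfold tv. rewrite <- dtx, <- dty, <- dthx, <- dthy. apply Htang, Ht. Qed.

Lemma len_sig (Hsp : forall t s, 0 <= t <= 1 -> speed c t s = len c t / (2 * PI)) :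
  forall t, 0 <= t <= 1 -> len c t = 2 * PI * sig t.
Proof.
 intros t Ht. pose proof PI_RGT_0. pose proof (Hsp t 0 Ht) as E.
 unfold speed in E. rewrite dthx, dthy in E. fold (S2 t 0) in E. fold (sig t) in E.
 assert (Hg : forall l : R, sig t = l / (2 * PI) -> l = 2 * PI * sig t) by (intros l Hl; rewrite Hl; field; lra).
 apply Hg, E.
Qed.

Lemma main_sec lmax lmin
  (Hsp : forall t s, 0 <= t <= 1 -> speed c t s = len c t / (2 * PI)) :
  (forall t, 0 <= t <= 1 -> len c t <= lmax) ->
  (forall t, 0 <= t <= 1 -> lmin <= len c t) ->
  (exists t, 0 <= t <= 1 /\ len c t = lmin) ->
  forall t1 t2 th1 th2,
    0 <= t1 <= 1 -> 0 <= t2 <= 1 ->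
    0 <= th1 <= 2 * PI -> 0 <= th2 <= 2 * PI ->
    Rabs (t1 - t2) <= Rmin (2 * sqrt (A * lmin)) (Rpower lmin (3 / 2)) / (8 * L) ->
    dist2 (c t1 th1) (c t2 th2) <=
      lmax / (2 * PI) * Rabs (th1 - th2)
      + 7 * (Rpower lmax (3 / 4) * Rpower A (- (1 / 4)) + Rpower lmax (1 / 4))
          * sqrt (L * Rabs (t1 - t2)).
Proof.
 intros Hmax Hmin [t0 [Ht0 Hl0]] t1 t2 th1 th2 Ht1 Ht2 Hth1 Hth2 Hdt.
 pose proof PI_RGT_0 as HPI.
 assert (Hlmin : 0 < lmin) by (rewrite <- Hl0, len_sig by auto; pose proof (sig_pos t0 Ht0); nra).
 assert (Hlmax : lmin <= lmax) by (rewrite <- Hl0; auto).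
 assert (Hlmx : 0 < lmax) by lra.
 assert (Hsmax : forall t, 0 <= t <= 1 -> 2 * PI * sig t <= lmax) by (intros; rewrite <- len_sig; auto).
 assert (Hsmin : forall t, 0 <= t <= 1 -> lmin <= 2 * PI * sig t) by (intros; rewrite <- len_sig; auto).
 rewrite dist2_Dist.
 set (m := sqrt (sqrt lmax)). set (q := sqrt (sqrt A)).
 rewrite Rp34, Rpm14, Rp14 by lra. fold m q.
 assert (Hm : 0 < m) by (apply sqrt_lt_R0, sqrt_lt_R0; lra).
 assert (Hq : 0 < q) by (apply sqrt_lt_R0, sqrt_lt_R0; lra).
 assert (Em : m ^ 4 = lmax).
 { unfold m. replace 4%nat with (2 * 2)%nat by reflexivity. rewrite pow_mult, !sqrt_sq; try lra.
   apply sqrt_pos. }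
 assert (Eq : q ^ 4 = A).
 { unfold q. replace 4%nat with (2 * 2)%nat by reflexivity. rewrite pow_mult, !sqrt_sq; try lra.
   apply sqrt_pos. }
 set (X := L * Rabs (t1 - t2)).
 assert (HX0 : 0 <= X) by (unfold X; pose proof (Rabs_pos (t1 - t2)); nra).
 assert (Hth : Dist t2 th1 t2 th2 <= lmax / (2 * PI) * Rabs (th1 - th2)).
 { eapply Rle_trans. apply lip; auto.
   apply Rmult_le_compat_r. apply Rabs_pos.
   apply Rmult_le_reg_l with (2 * PI). lra. replace (2 * PI * (lmax / (2 * PI))) with lmax by (field; lra).
   apply Hsmax; auto. }
 assert (Htri := Dist_tri t1 th1 t2 th1 t2 th2).
 assert (HP : 0 <= 7 * (m ^ 3 * / q + m) * sqrt X).
 { apply Rmult_le_pos. apply Rmult_le_pos. lra.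
   assert (0 < m ^ 3 * / q) by (apply Rmult_lt_0_compat; [apply pow_lt|apply Rinv_0_lt_compat]; lra). lra.
   apply sqrt_pos. }
 destruct (Req_dec t1 t2) as [E|Hne].
 { subst t2. assert (Dist t1 th1 t1 th1 = 0).
   { unfold Dist. rewrite !Rminus_eq_0. replace (0 ^ 2 + 0 ^ 2) with 0 by ring. apply sqrt_0. }
   lra. }
 assert (HXpos : 0 < X) by (unfold X; assert (0 < Rabs (t1 - t2)) by (apply Rabs_pos_lt; lra); nra).
 assert (HX : X <= Rmin (2 * sqrt (A * lmin)) (Rpower lmin (3 / 2)) / 8).
 { unfold X. apply Rmult_le_reg_r with (/ L). apply Rinv_0_lt_compat; lra.
   replace (L * Rabs (t1 - t2) * / L) with (Rabs (t1 - t2)) by (field; lra).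
   replace (Rmin (2 * sqrt (A * lmin)) (Rpower lmin (3 / 2)) / 8 * / L) with
     (Rmin (2 * sqrt (A * lmin)) (Rpower lmin (3 / 2)) / (8 * L)) by (field; lra). auto. }
 assert (HX1 : X ^ 2 <= A * lmin / 16).
 { assert (X <= 2 * sqrt (A * lmin) / 8) by (pose proof (Rmin_l (2 * sqrt (A * lmin)) (Rpower lmin (3 / 2))); lra).
   assert (X ^ 2 <= (2 * sqrt (A * lmin) / 8) ^ 2) by (apply pow_incr; lra).
   replace ((2 * sqrt (A * lmin) / 8) ^ 2) with (sqrt (A * lmin) ^ 2 / 16) in H0 by field.
   rewrite sqrt_sq in H0 by nra. lra. }
 assert (HX2 : X ^ 2 <= lmin ^ 3 / 64).
 { assert (X <= Rpower lmin (3 / 2) / 8) by (pose proof (Rmin_r (2 * sqrt (A * lmin)) (Rpower lmin (3 / 2))); lra).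
   rewrite Rp32 in H by lra.
   assert (X ^ 2 <= (lmin * sqrt lmin / 8) ^ 2) by (apply pow_incr; lra).
   replace ((lmin * sqrt lmin / 8) ^ 2) with (lmin ^ 2 * sqrt lmin ^ 2 / 64) in H0 by field.
   rewrite sqrt_sq in H0 by lra. replace (lmin ^ 3) with (lmin ^ 2 * lmin) by ring. lra. }
 assert (HD : Dist t1 th1 t2 th1 <= 4 * m * sqrt X + 2 * X * sqrt (lmax / A)).
 { destruct (Rlt_dec t1 t2) as [h|h].
   - assert (EX : X = L * (t2 - t1)) by (unfold X; rewrite Rabs_minus_sym, Rabs_right; lra).
     rewrite EX in *. apply (D_bound _ _ _ lmax lmin); auto; lra.
   - assert (EX : X = L * (t1 - t2)) by (unfold X; rewrite Rabs_right; lra).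
     rewrite EX in *. rewrite Dist_sym. apply (D_bound _ _ _ lmax lmin); auto; lra. }
 assert (HT3 : 2 * X * sqrt (lmax / A) <= 7 * (m ^ 3 * / q) * sqrt X).
 { destruct (root4 X HXpos) as [x [Hx [Ex [Ex2 _]]]].
   rewrite <- Ex2.
   assert (Es : sqrt (lmax / A) = m ^ 2 / q ^ 2).
   { rewrite <- Em, <- Eq. replace ((m ^ 4) / (q ^ 4)) with ((m ^ 2 / q ^ 2) ^ 2) by (field; lra).
     apply sqrt_pow2. apply Rlt_le, Rdiv_lt_0_compat; apply pow_lt; lra. }
   rewrite Es, <- Ex.
   assert (Hl : x ^ 2 <= q * m / 2).
   { apply pow4_le_inv. nra. replace ((x ^ 2) ^ 4) with (X ^ 2) by (rewrite <- Ex; ring).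
     apply Rle_trans with (A * lmax / 16). nra.
     rewrite <- Em, <- Eq. right. field. }
   apply Rle_trans with (2 * x ^ 2 * (m ^ 2 / q ^ 2) * x ^ 2).
   right; ring.
   replace (7 * (m ^ 3 * / q) * x ^ 2) with ((7 * m * q) * (m ^ 2 / q ^ 2) * x ^ 2) by (field; lra).
   apply Rmult_le_compat_r. apply pow2_ge_0. apply Rmult_le_compat_r.
   apply Rlt_le, Rdiv_lt_0_compat; apply pow_lt; lra. nra. }
 assert (4 * m * sqrt X <= 7 * m * sqrt X) by (pose proof (sqrt_pos X); nra).
 lra.
Qed.

End Main.

Theorem corollary3p8 (A L : R) (c : path) (lmax lmin : R) :
  0 < A -> 0 < L ->
  smooth_path c ->
  (forall t, 0 <= t <= 1 -> immersion_at c t) ->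
  (forall t s, 0 <= t <= 1 -> speed c t s = len c t / (2 * PI)) ->
  (forall t, 0 <= t <= 1 -> tang_vel c t 0 = 0) ->
  (forall t, 0 <= t <= 1 ->
     RInt (fun s => (1 + A * curv c t s ^ 2) * norm_vel c t s ^ 2 / speed c t s)
          0 (2 * PI) = L ^ 2) ->
  (forall t, 0 <= t <= 1 -> len c t <= lmax) ->
  (exists t, 0 <= t <= 1 /\ len c t = lmax) ->
  (forall t, 0 <= t <= 1 -> lmin <= len c t) ->
  (exists t, 0 <= t <= 1 /\ len c t = lmin) ->
  forall t1 t2 th1 th2,
    0 <= t1 <= 1 -> 0 <= t2 <= 1 ->
    0 <= th1 <= 2 * PI -> 0 <= th2 <= 2 * PI ->
    Rabs (t1 - t2) <= Rmin (2 * sqrt (A * lmin)) (Rpower lmin (3 / 2)) / (8 * L) ->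
    dist2 (c t1 th1) (c t2 th2) <=
      lmax / (2 * PI) * Rabs (th1 - th2)
      + 7 * (Rpower lmax (3 / 4) * Rpower A (- (1 / 4)) + Rpower lmax (1 / 4))
          * sqrt (L * Rabs (t1 - t2)).
Proof.
 intros HA HL Hsm Himm Hsp Htang Hen Hmax _ Hmin Hex.
 destruct Hsm as [[Dx [HDx0 HDx]] [[Dy [HDy0 HDy]] Hper]].
 pose proof (S2_from c Dx Dy HDx0 HDy0 HDx HDy Hsp) as HS2.
 pose proof (S2pos_from c Dx Dy HDx0 HDy0 HDx HDy Himm) as HS2p.
 pose proof (tv0_from c Dx Dy HDx0 HDy0 HDx HDy Htang) as Htv.
 exact (main_sec c Dx Dy HDx0 HDy0 HDx HDy Hper HS2 HS2p Htv A L HA HL Hen lmax lmin Hsp Hmax Hmin Hex).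
Qed.
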